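(* Let $b$ be a prime, $s,m\in\mathbb{N}$, and let $\mathcal{P}$ be a digital $((t_{\mathfrak{u}})_{\mathfrak{u}\subseteq[s]},m,s)$-net over $\mathbb{F}_b$ with generating matrices $C_1^{(m)},\dots,C_s^{(m)}\in\mathbb{F}_b^{m\times m}$. Let $0=w_1\le\dots\le w_s$ be reduction indices, $\widetilde{C}_1^{(m)},\dots,\widetilde{C}_s^{(m)}$ the corresponding row reduced matrices, and let $(\widetilde{t}_{\mathfrak{u}})_{\mathfrak{u}\subseteq[s]}$ be the minimal quality parameters of the projections of the digital net generated by the $\widetilde{C}_j^{(m)}$. Then for every nonempty $\mathfrak{u}\subseteq[s]$, writing $\overline{\mathfrak{u}}=\max\mathfrak{u}$, \[ \max\{0,\, m-\max\{w_{\overline{\mathfrak{u}}},t_{\mathfrak{u}}\}\}\le \rho_m\big((\widetilde{C}_j^{(m)})_{j\in\mathfrak{u}}\big)\le \max\{0,\, m-w_{\overline{\mathfrak{u}}}\}, \] and $\widetilde{t}_{\mathfrak{u}}\le\min\{m,\max\{w_{\overline{\mathfrak{u}}},t_{\mathfrak{u}}\}\}$.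
   Context: $[s]=\{1,\dots,s\}$. Digital nets over $\mathbb{F}_b$: for matrices $C_1^{(m)},\dots,C_s^{(m)}\in\mathbb{F}_b^{m\times m}$, the generated net consists of the $b^m$ points $\boldsymbol{x}_k$, $0\le k<b^m$, with $x_{k,j}=(C_j^{(m)}\vec{k})\cdot(b^{-1},\dots,b^{-m})$, where $\vec{k}=(k_0,\dots,k_{m-1})^\top$ is the base-$b$ digit vector of $k=\sum k_ib^i$ and the product is computed over $\mathbb{F}_b$ (identified with $\{0,\dots,b-1\}$). A $(t,m,s)$-net in base $b$ is a set of $b^m$ points in $[0,1)^s$ such that every elementary interval $\prod_j[a_jb^{-d_j},(a_j+1)b^{-d_j})$ of volume $b^{t-m}$ contains exactly $b^t$ points. A digital $((t_{\mathfrak{u}})_{\mathfrak{u}\subseteq[s]},m,s)$-net is a digital net such that, for each nonempty $\mathfrak{u}\subseteq[s]$, the projection onto the coordinates in $\mathfrak{u}$ (generated by $(C_j^{(m)})_{j\in\mathfrak{u}}$) is a $(t_{\mathfrak{u}},m,|\mathfrak{u}|)$-net; the minimal quality parameter of a projection is the smallest such value. The linear independence parameter $\rho_m$ of a family of $m\times m$ matrices $(C_j)_{j\in J}$ is the largest $d$ such that for all $d_j\in\mathbb{N}_0$ ($j\in J$) with $\sum_j d_j=d$, the collection of the first $d_j$ rows of $C_j$, $j\in J$, is linearly independent over $\mathbb{F}_b$. Row reduction: $\widetilde{C}_j^{(m)}$ equals $C_j^{(m)}$ except that its last $\min(m,w_j)$ rows are set to zero. *)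

(* Defs.v *)
From HB Require Import structures.
From mathcomp Require Import all_boot all_order all_algebra.
Set Implicit Arguments. Unset Strict Implicit. Unset Printing Implicit Defensive.
Import Order.TTheory GRing.Theory Num.Theory.
Local Open Scope ring_scope.
From Stdlib Require Import ClassicalEpsilon.

Definition pbool (P : Prop) : bool :=
  if excluded_middle_informative P then true else false.

Section DigitalNets.
Variables (b m s : nat).

Definition digitvec (k : nat) : 'cV['F_b]_m :=
  \col_(i < m) ((k %/ b ^ i) %% b)%N%:R.

(* j-th coordinate of the k-th point of the digital net generated by C,
   x_{k,j} = (C_j k) . (b^-1, ..., b^-m), computed as a rational number;
   F_b is identified with {0, ..., b-1} via the ordinal value. *)
Definition net_point (C : 'I_s -> 'M['F_b]_m) (k : nat) (j : 'I_s) : rat :=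
  \sum_(i < m) ((nat_of_ord ((C j *m digitvec k) i 0))%:R / (b%:R ^+ i.+1)).

Definition is_proj_tnet (C : 'I_s -> 'M['F_b]_m) (u : {set 'I_s}) (t : nat) : Prop :=
  (t <= m)%N /\
  forall (d a : 'I_s -> nat),
    (\sum_(j in u) d j)%N = (m - t)%N ->
    (forall j, j \in u -> (a j < b ^ d j)%N) ->
    #|[set k : 'I_(b ^ m) | [forall j in u,
        ((a j)%:R / (b%:R ^+ d j) <= net_point C k j) &&
        (net_point C k j < (a j).+1%:R / (b%:R ^+ d j))]]| = (b ^ t)%N.

Definition is_digital_tu_net (C : 'I_s -> 'M['F_b]_m) (t : {set 'I_s} -> nat) : Prop :=
  forall u : {set 'I_s}, u != set0 -> is_proj_tnet C u (t u).

(* minimal quality parameter of the projection onto u: the smallest t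
   such that the projection is a (t,m,|u|)-net (t ranges over 0..m by the
   definition of a (t,m,s)-net; m itself is always admissible). *)
Definition min_quality (C : 'I_s -> 'M['F_b]_m) (u : {set 'I_s}) : nat :=
  \big[minn/m]_(t < m.+1 | pbool (is_proj_tnet C u t)) t.

Definition first_rows (C : 'I_s -> 'M['F_b]_m) (u : {set 'I_s}) (d : 'I_s -> nat)
  : seq 'rV['F_b]_m :=
  flatten [seq [seq row i (C j) | i : 'I_m <- enum 'I_m & (nat_of_ord i < d j)%N] | j <- enum u].

(* linear independence parameter rho_m((C_j)_{j in u}): the largest d such that
   for all d_j (j in u) with sum d_j = d, the first d_j rows of the C_j are
   linearly independent over F_b (as a family, i.e. counted with repetition).
   Such d never exceed m (more than m vectors in F_b^m are dependent). *)
Definition lin_indep_prop (C : 'I_s -> 'M['F_b]_m) (u : {set 'I_s}) (dd : nat) : Prop :=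
  forall d : 'I_s -> nat,
    (\sum_(j in u) d j)%N = dd ->
    (forall j, j \in u -> (d j <= m)%N) ->
    free (first_rows C u d).

Definition rho (C : 'I_s -> 'M['F_b]_m) (u : {set 'I_s}) : nat :=
  \max_(dd < m.+1 | pbool (lin_indep_prop C u dd)) dd.

Definition row_reduce (C : 'I_s -> 'M['F_b]_m) (w : 'I_s -> nat) (j : 'I_s)
  : 'M['F_b]_m :=
  \matrix_(r < m, c < m) (if (r < m - minn m (w j))%N then C j r c else 0).

End DigitalNets.

(* Main.v *)
Require Import Defs.
From HB Require Import structures.
From mathcomp Require Import all_boot all_order all_algebra.
From mathcomp Require Import zify ring lra.
From Stdlib Require Import ClassicalEpsilon.
Set Implicit Arguments. Unset Strict Implicit. Unset Printing Implicit Defensive.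
Import Order.TTheory GRing.Theory Num.Theory.

Section Digits.
Variable b : nat.
Hypothesis b_gt0 : (0 < b)%N.

Lemma modn_split x p q : (0 < p)%N -> (0 < q)%N ->
  x %% (p * q) = x %% p + p * ((x %/ p) %% q).
Proof.
move=> p0 q0.
have H1 := divn_eq x p; have H2 := divn_eq (x %/ p) q.
have E : x = (x %/ p %/ q) * (p * q) + ((x %/ p) %% q * p + x %% p).
  by rewrite {1}H1 {1}H2 mulnDl -addnA (mulnC p q) mulnA.
rewrite {1}E modnMDl modn_small; first by rewrite mulnC addnC.
have := ltn_pmod (x %/ p) q0; have := ltn_pmod x p0; nia.
Qed.

Lemma digits_inj d x x' :
  (forall e, (e < d)%N -> (x %/ b ^ e) %% b = (x' %/ b ^ e) %% b) ->
  x %% b ^ d = x' %% b ^ d.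
Proof.
elim: d => [|d IH] H; first by rewrite !expn0 !modn1.
rewrite expnSr !modn_split ?expn_gt0 ?b_gt0 // IH ?H //.
by move=> e He; apply: H; apply: ltnW.
Qed.

Fixpoint numV (y : nat -> nat) (n : nat) : nat :=
  if n is n'.+1 then numV y n' * b + y n' else 0.

Lemma numV_lt y n : (forall i, y i < b)%N -> (numV y n < b ^ n)%N.
Proof.
move=> Hy; elim: n => [|n IH] /=; first by rewrite expn0.
rewrite expnSr; have := Hy n; nia.
Qed.

Lemma numV_split y d e :
  numV y (d + e) = numV y d * b ^ e + numV (fun i => y (d + i)) e.
Proof.
elim: e => [|e IH]; first by rewrite addn0 expn0 muln1 addn0.
by rewrite addnS /= IH expnSr mulnDl -mulnA; lia.
Qed.

Lemma numV_div y d m : (d <= m)%N -> (forall i, y i < b)%N ->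
  numV y m %/ b ^ (m - d) = numV y d.
Proof.
move=> Hdm Hy; rewrite -{1}(subnKC Hdm) numV_split divnMDl ?expn_gt0 ?b_gt0 //.
by rewrite divn_small ?addn0 // numV_lt.
Qed.

Definition digit a d i := (a %/ b ^ (d - i.+1)) %% b.

Lemma numV_digit y d i : (i < d)%N -> (forall i, y i < b)%N ->
  digit (numV y d) d i = y i.
Proof.
move=> Hid Hy; rewrite /digit numV_div //= modnMDl modn_small //.
Qed.

Lemma numV_eq_iff y d a : (a < b ^ d)%N -> (forall i, y i < b)%N ->
  (numV y d = a) <-> (forall i, (i < d)%N -> y i = digit a d i).
Proof.
move=> Ha Hy; split.
  by move=> <- i Hi; rewrite numV_digit.
move=> H; rewrite -(modn_small (numV_lt d Hy)) -(modn_small Ha).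
apply: digits_inj => e He.
have Hi : (d - e.+1 < d)%N by lia.
have := H _ Hi; rewrite -(numV_digit Hi Hy) /digit.
by have -> : (d - (d - e.+1).+1 = e)%N by lia.
Qed.

Lemma digit_lt a d i : (digit a d i < b)%N.
Proof. by rewrite /digit ltn_pmod. Qed.

End Digits.

Section Rat.
Variable b : nat.
Hypothesis b_gt0 : (0 < b)%N.
Local Open Scope ring_scope.

Lemma bR_neq0 : (b%:R : rat) != 0.
Proof. by rewrite pnatr_eq0 -lt0n. Qed.

Lemma sum_rat (y : nat -> nat) m :
  \sum_(i < m) ((y i)%:R / (b%:R ^+ i.+1)) = (numV b y m)%:R / b%:R ^+ m :> rat.
Proof.
elim: m => [|m IH]; first by rewrite big_ord0 /= mul0r.
rewrite big_ord_recr /= IH natrD natrM exprS.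
have := bR_neq0; set B := (b%:R : rat) => HB.
have HBm : B ^+ m != 0 by rewrite expf_neq0.
by field; rewrite HB HBm.
Qed.

Lemma interval_iff (y : nat -> nat) m d a : (d <= m)%N -> (forall i, y i < b)%N ->
  ((a%:R / (b%:R ^+ d) <= \sum_(i < m) ((y i)%:R / (b%:R ^+ i.+1)) :> rat) &&
   (\sum_(i < m) ((y i)%:R / (b%:R ^+ i.+1)) < a.+1%:R / (b%:R ^+ d) :> rat))
  = (numV b y d == a).
Proof.
move=> Hdm Hy; rewrite sum_rat.
have HB := bR_neq0; set B := (b%:R : rat) in HB *.
have Bpos : 0 < B ^+ m by rewrite exprn_gt0 // ltr0n.
have E : forall c : nat, c%:R / B ^+ d = (c * b ^ (m - d))%:R / B ^+ m.
  move=> c; rewrite natrM natrX -/B -{2}(subnKC Hdm) exprD.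
  have HBd : B ^+ d != 0 by rewrite expf_neq0.
  have HBe : B ^+ (m - d) != 0 by rewrite expf_neq0.
  by field; rewrite HBd HBe.
rewrite !E !ler_pM2r ?ltr_pM2r ?invr_gt0 // ler_nat ltr_nat.
have q0 : (0 < b ^ (m - d))%N by rewrite expn_gt0 b_gt0.
by rewrite -leq_divRL // -ltn_divLR // numV_div // ltnS eqn_leq andbC.
Qed.
End Rat.

Section Mx.
Variable F : finFieldType.
Local Open Scope ring_scope.

Lemma mx_surj n m (S : 'M[F]_(n, m)) : row_free S -> forall y : 'cV_n, exists v, S *m v = y.
Proof.
move=> HS y.
have Hf : row_full S^T by rewrite /row_full mxrank_tr.
have /submxP [D HD] := submx_full y^T Hf.
exists D^T; by rewrite -[S]trmxK -trmx_mul -HD trmxK.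
Qed.

Lemma mx_fiber n m (S : 'M[F]_(n, m)) : row_free S -> forall y : 'cV_n,
  #|[set v : 'cV_m | S *m v == y]| = (#|F| ^ (m - n))%N.
Proof.
move=> HS.
have fib : forall y, #|[set v : 'cV_m | S *m v == y]| = #|[set v : 'cV_m | S *m v == 0]|.
  move=> y; have [v0 Hv0] := mx_surj HS y.
  rewrite -[RHS](card_imset _ (addIr v0)); apply: eq_card => v.
  rewrite inE; apply/eqP/imsetP.
    move=> Hv; exists (v - v0); first by rewrite inE mulmxBr Hv Hv0 subrr.
    by rewrite subrK.
  by move=> [w]; rewrite inE => /eqP Hw ->; rewrite mulmxDr Hw Hv0 add0r.
have tot : #|{: 'cV[F]_m}| = (\sum_(y : 'cV[F]_n) #|[set v : 'cV_m | S *m v == y]|)%N.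
  rewrite -sum1_card (partition_big (fun v => S *m v) xpredT) //=.
  by apply: eq_bigr => y _; rewrite -sum1_card; apply: eq_bigl => v; rewrite inE.
move: tot; rewrite (eq_bigr _ (fun y _ => fib y)) sum_nat_const !card_mx !muln1.
have Hnm : (n <= m)%N by rewrite -(eqP HS) rank_leq_col.
rewrite -{1}(subnK Hnm) expnD mulnC => /eqP.
have F0 : (0 < #|F|)%N by apply/card_gt0P; exists 0.
rewrite eqn_pmul2l ?expn_gt0 ?F0 // => /eqP E y.
by rewrite fib E.
Qed.

Lemma mx_miss n m (S : 'M[F]_(n, m)) : ~~ row_free S -> exists y : 'cV_n, forall v, S *m v != y.
Proof.
move=> HS.
have Hf : ~~ row_full S^T by rewrite /row_full mxrank_tr.
case: (pickP (fun i => ~~ (row i (1%:M : 'M[F]_n) <= S^T)%MS)) => [i Hi | H].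
  exists (row i 1%:M)^T => v; apply: contra Hi => /eqP Hv.
  by rewrite -[row i _]trmxK -Hv trmx_mul submxMl.
exfalso; move/negP: Hf; apply; rewrite -sub1mx; apply/row_subP => i.
by have := H i => /= /negbFE.
Qed.

Lemma free_row_free m (s : seq 'rV[F]_m) :
  free s = row_free (\matrix_(k < size s) s`_k).
Proof.
set S := \matrix_(k < size s) s`_k.
have sumE : forall c : 'rV_(size s), c *m S = \sum_i c 0 i *: s`_i.
  by move=> c; rewrite mulmx_sum_row; apply: eq_bigr => i _; rewrite rowK.
apply/idP/idP => H.
  rewrite -kermx_eq0; apply/negPn/negP => HK.
  have [i Hi] : exists i, row i (kermx S) != 0.
    apply/existsP; apply: contraR HK => /existsPn Hz.
    by apply/eqP/row_matrixP => i; rewrite row0; apply/eqP; apply: negbNE.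
  have Hv : row i (kermx S) *m S = 0 by rewrite -row_mul mulmx_ker row0.
  move/(@freeP _ _ _ (in_tuple s)): (H) => Hfr; rewrite /= in Hfr.
  move: Hi; rewrite -[X in X != 0]/(row i (kermx S)) => /negP; apply.
  apply/eqP/rowP => j; rewrite mxE.
  have := Hfr (fun j => row i (kermx S) 0 j); rewrite -sumE Hv => /(_ erefl j).
  by rewrite !mxE.
have Hfr := H.
apply/(@freeP _ _ _ (in_tuple s)) => k Hk i.
have := mulmx_free_eq0 (\row_j k j) Hfr; rewrite sumE.
rewrite (eq_bigr (fun i => k i *: s`_i)); last by move=> j _; rewrite mxE.
rewrite Hk eqxx => /esym/eqP/rowP/(_ i); by rewrite !mxE.
Qed.

End Mx.

Section Rows.
Variable F : finFieldType.
Local Open Scope ring_scope.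

Lemma rows_eq m (s : seq 'rV[F]_m) (y : seq F) (v : 'cV[F]_m) : size y = size s ->
  ([seq (r *m v) 0 0 | r <- s] == y) =
  ((\matrix_(k < size s) s`_k) *m v == \col_(k < size s) y`_k).
Proof.
move=> Hy.
have E : forall k : 'I_(size s), ((\matrix_(k < size s) s`_k) *m v) k 0 = (s`_k *m v) 0 0.
  move=> k; have -> : (s`_k *m v) = row k ((\matrix_(k < size s) s`_k) *m v) by rewrite row_mul rowK.
  by rewrite [RHS]mxE.
apply/eqP/eqP => H.
  apply/colP => k; rewrite E [RHS]mxE -H (nth_map 0) //.
apply: (@eq_from_nth _ 0); first by rewrite size_map.
move=> k; rewrite size_map => Hk.
move/colP: H => /(_ (Ordinal Hk)); rewrite E [RHS]mxE /= => <-.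
by rewrite (nth_map 0).
Qed.

Lemma count_rows m (s : seq 'rV[F]_m) : free s -> forall y : seq F, size y = size s ->
  #|[set v : 'cV[F]_m | [seq (r *m v) 0 0 | r <- s] == y]| = (#|F| ^ (m - size s))%N.
Proof.
rewrite free_row_free => Hf y Hy.
rewrite -(mx_fiber Hf (\col_(k < size s) y`_k)); apply: eq_card => v.
by rewrite !inE rows_eq.
Qed.

Lemma miss_rows m (s : seq 'rV[F]_m) : ~~ free s ->
  exists y : seq F, size y = size s /\ forall v : 'cV[F]_m, [seq (r *m v) 0 0 | r <- s] != y.
Proof.
rewrite free_row_free => /mx_miss [yc Hyc].
exists [seq yc k 0 | k <- enum 'I_(size s)]; split; first by rewrite size_map size_enum_ord.
move=> v; rewrite rows_eq ?size_map ?size_enum_ord //.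
have -> : \col_(k < size s) [seq yc k 0 | k <- enum 'I_(size s)]`_k = yc.
  by apply/colP => k; rewrite mxE (nth_map k) ?size_enum_ord // nth_ord_enum.
exact: Hyc.
by rewrite -enumT size_enum_ord.
Qed.
End Rows.

Section Pd.
Variables (b m s : nat).

Definition Pd (u : {set 'I_s}) (d : 'I_s -> nat) : seq ('I_s * 'I_m) :=
  [seq (j, i) | j <- enum u, i <- [seq i : 'I_m <- enum 'I_m | (i < d j)%N]].

Definition rowf (R : 'I_s -> 'M['F_b]_m) (p : 'I_s * 'I_m) : 'rV['F_b]_m := row p.2 (R p.1).

Lemma first_rowsE (R : 'I_s -> 'M['F_b]_m) u d : first_rows R u d = map (rowf R) (Pd u d).
Proof.
rewrite /first_rows /Pd map_flatten -map_comp; congr flatten; apply: eq_map => j /=.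
by rewrite -map_comp.
Qed.

Lemma mem_Pd u d p : (p \in Pd u d) = (p.1 \in u) && (p.2 < d p.1)%N.
Proof.
apply/allpairsPdep/andP => [[j [i [Hj Hi ->]]] | [H1 H2]].
  by rewrite mem_enum in Hj; rewrite mem_filter in Hi; case/andP: Hi.
exists p.1, p.2; split; last by case: p {H1 H2}.
  by rewrite mem_enum.
by rewrite mem_filter H2 mem_enum.
Qed.

Lemma uniq_Pd u d : uniq (Pd u d).
Proof.
apply: allpairs_uniq_dep; first exact: enum_uniq.
  by move=> j _; apply: filter_uniq; exact: enum_uniq.
by move=> [j i] [j' i'] _ _ /= [-> ->].
Qed.

Lemma count_ord d : (d <= m)%N -> count (fun i : 'I_m => (i < d)%N) (enum 'I_m) = d.
Proof.
move=> Hd.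
have -> : count (fun i : 'I_m => (i < d)%N) (enum 'I_m) = count (fun n => n < d)%N (map val (enum 'I_m)).
  by rewrite count_map.
rewrite val_enum_ord -(subnKC Hd) iotaD count_cat add0n.
rewrite (@eq_in_count _ _ predT (iota 0 d)); last by move=> x; rewrite mem_iota => /andP [_ ->].
rewrite count_predT size_iota.
rewrite (@eq_in_count _ _ pred0 (iota d _)); last first.
  by move=> x; rewrite mem_iota => /andP [H _] /=; rewrite ltnNge H.
by rewrite count_pred0 addn0.
Qed.

Lemma size_Pd (u : {set 'I_s}) (d : 'I_s -> nat) : (forall j, j \in u -> d j <= m)%N -> size (Pd u d) = (\sum_(j in u) d j)%N.
Proof.
move=> Hd; rewrite /Pd size_allpairs_dep sumnE big_map -big_enum.
apply: eq_big_seq => j; rewrite mem_enum => Hj.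
by rewrite size_filter count_ord // Hd.
Qed.

End Pd.

Section Interval.
Variables (b m s : nat).
Hypothesis Hb : prime b.
Local Open Scope ring_scope.

Lemma b_gt0 : (0 < b)%N. Proof. exact: prime_gt0. Qed.

Lemma Fb_lt (x : 'F_b) : (nat_of_ord x < b)%N.
Proof. rewrite -[X in (_ < X)%N](Fp_cast Hb); exact: ltn_ord x. Qed.

Lemma Fb_natE (x : 'F_b) n : (n < b)%N -> (x == n%:R) = (nat_of_ord x == n).
Proof.
move=> Hn; apply/eqP/eqP => [-> | H]; first by rewrite val_Fp_nat // modn_small.
by apply: val_inj; rewrite /= val_Fp_nat // modn_small.
Qed.

Definition ordf (f : 'I_m -> nat) : nat -> nat := fun n => nth 0%N (map f (enum 'I_m)) n.

Lemma ordfE f (i : 'I_m) : ordf f i = f i.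
Proof. by rewrite /ordf (nth_map i) ?size_enum_ord // nth_ord_enum. Qed.

Lemma ordf_lt f : (forall i, f i < b)%N -> forall n, (ordf f n < b)%N.
Proof.
move=> Hf n; rewrite /ordf; case: (ltnP n (size (map f (enum 'I_m)))) => Hn.
  have Hn' : (n < m)%N by rewrite size_map size_enum_ord in Hn.
  by rewrite (nth_map (Ordinal Hn')) ?size_enum_ord.
by rewrite nth_default // b_gt0.
Qed.

Definition ent (R : 'I_s -> 'M['F_b]_m) (k : nat) (p : 'I_s * 'I_m) : 'F_b :=
  (rowf R p *m digitvec b m k) 0 0.

Lemma entE R k j i : ent R k (j, i) = (R j *m digitvec b m k) i 0.
Proof. by rewrite /ent /rowf /= -row_mul [LHS]mxE. Qed.

Lemma interval_all (R : 'I_s -> 'M['F_b]_m) (u : {set 'I_s}) (d a : 'I_s -> nat) (k : nat) :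
  (forall j, j \in u -> d j <= m)%N -> (forall j, j \in u -> a j < b ^ d j)%N ->
  [forall j in u, ((a j)%:R / (b%:R ^+ d j) <= net_point R k j) &&
                  (net_point R k j < (a j).+1%:R / (b%:R ^+ d j))]
  = all (fun p => ent R k p == (digit b (a p.1) (d p.1) p.2)%:R) (Pd m u d).
Proof.
move=> Hd Ha.
pose y j := ordf (fun i => nat_of_ord ((R j *m digitvec b m k) i 0)).
have Hy : forall j n, (y j n < b)%N by move=> j; apply: ordf_lt => i; apply: Fb_lt.
have netE : forall j, net_point R k j = \sum_(i < m) ((y j i)%:R / (b%:R ^+ i.+1)).
  by move=> j; apply: eq_bigr => i _; rewrite /y ordfE.
apply/forall_inP/allP => H.
  move=> [j i]; rewrite mem_Pd /= => /andP [Hj Hi].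
  have := H j Hj; rewrite netE interval_iff ?b_gt0 ?Hd // => /eqP.
  move/(numV_eq_iff b_gt0 (Ha j Hj) (Hy j)) => /(_ i Hi).
  by rewrite /y ordfE entE Fb_natE ?digit_lt ?b_gt0 // => ->.
move=> j Hj; rewrite netE interval_iff ?b_gt0 ?Hd //; apply/eqP.
apply/(numV_eq_iff b_gt0 (Ha j Hj) (Hy j)) => i Hi.
have Him : (i < m)%N by apply: leq_trans Hi (Hd j Hj).
have := H (j, Ordinal Him); rewrite mem_Pd /= Hj Hi => /(_ erefl).
by rewrite entE Fb_natE ?digit_lt ?b_gt0 // /y -[i]/(nat_of_ord (Ordinal Him)) ordfE => /eqP.
Qed.
End Interval.

Section Main.
Variables (b m s : nat).
Hypothesis Hb : prime b.
Local Open Scope ring_scope.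

Lemma digitvec_inj k k' : (k < b ^ m)%N -> (k' < b ^ m)%N ->
  digitvec b m k = digitvec b m k' -> k = k'.
Proof.
move=> Hk Hk' E; rewrite -(modn_small Hk) -(modn_small Hk').
apply: (digits_inj (b_gt0 Hb)) => e He.
move/colP: E => /(_ (Ordinal He)); rewrite !mxE => /(congr1 (@nat_of_ord _)).
by rewrite !val_Fp_nat // !modn_mod.
Qed.

Lemma count_dv (Q : pred 'cV['F_b]_m) :
  #|[set k : 'I_(b ^ m) | Q (digitvec b m k)]| = #|[set v | Q v]|.
Proof.
pose f := fun k : 'I_(b ^ m) => digitvec b m k.
have finj : injective f by move=> k k' /digitvec_inj E; apply: val_inj; apply: E.
have fonto := inj_card_onto finj.
have Hc : (#|{: 'cV['F_b]_m}| <= #|{: 'I_(b ^ m)}|)%N by rewrite card_mx card_Fp // muln1 card_ord.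
rewrite -(card_imset _ finj); apply: eq_card => v; rewrite inE.
apply/imsetP/idP => [[k Hk ->] | Hv]; first by rewrite inE in Hk.
have /codomP [k Hk] := fonto Hc v.
by exists k; rewrite // inE -/(f k) -Hk.
Qed.

Lemma free_sub (C : 'I_s -> 'M['F_b]_m) (P P' : seq ('I_s * 'I_m)) :
  uniq P -> {subset P <= P'} -> free (map (rowf C) P') -> free (map (rowf C) P).
Proof.
move=> HU Hsub Hf; apply/negPn/negP => /miss_rows [y [Hy Hmiss]].
pose tgt p := nth 0 y (index p P).
have Etgt : map tgt P = y.
  apply: (@eq_from_nth _ 0); first by rewrite size_map Hy size_map.
  move=> i; rewrite size_map => Hi.
  have p0 : ('I_s * 'I_m)%type.
    by destruct P as [|p P0]; [done | exact p].
  by rewrite (nth_map p0) // /tgt index_uniq.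
have Hc := count_rows Hf (y := map tgt P').
rewrite !size_map in Hc; have {Hc} := Hc erefl.
have F0 : (0 < #|'F_b|)%N by rewrite card_Fp // prime_gt0.
have : (0 < #|'F_b| ^ (m - size P'))%N by rewrite expn_gt0 F0.
move=> H1 H2; rewrite -H2 in H1.
have /card_gt0P [v] := H1; rewrite inE -map_comp => /eqP /eq_in_map Hv.
move: (Hmiss v) => /negP; apply; apply/eqP; rewrite -Etgt -map_comp.
by apply/eq_in_map => p Hp; apply: Hv; apply: Hsub.
Qed.

Lemma Fb_natK (x : 'F_b) : (nat_of_ord x)%:R = x.
Proof. by apply/eqP; rewrite eq_sym Fb_natE ?Fb_lt. Qed.

Lemma net_free (C : 'I_s -> 'M['F_b]_m) (u : {set 'I_s}) t0 (d : 'I_s -> nat) :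
  is_proj_tnet C u t0 -> (\sum_(j in u) d j)%N = (m - t0)%N ->
  (forall j, j \in u -> d j <= m)%N -> free (map (rowf C) (Pd m u d)).
Proof.
move=> [Ht Hnet] Hs Hd; apply/negPn/negP => /miss_rows [y [Hy Hmiss]].
pose P := Pd m u d.
pose tgt p := nth 0 y (index p P).
have Etgt : map tgt P = y.
  apply: (@eq_from_nth _ 0); first by rewrite size_map Hy size_map.
  move=> i; rewrite size_map => Hi.
  have p0 : ('I_s * 'I_m)%type.
    by destruct P as [|p P0]; [done | exact p].
  by rewrite (nth_map p0) // /tgt index_uniq // uniq_Pd.
pose a j := numV b (ordf (fun i => nat_of_ord (tgt (j, i)))) (d j).
have Hlt : forall j n, (ordf (fun i => nat_of_ord (tgt (j, i))) n < b)%N.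
  by move=> j; apply: ordf_lt => // i; apply: Fb_lt.
have Ha : forall j, j \in u -> (a j < b ^ d j)%N.
  by move=> j _; apply: numV_lt => //; apply: prime_gt0.
have := Hnet d a Hs Ha.
have -> : [set k : 'I_(b ^ m) | [forall j in u, ((a j)%:R / (b%:R ^+ d j) <= net_point C k j) &&
                  (net_point C k j < (a j).+1%:R / (b%:R ^+ d j))]] = set0.
  apply/setP => k; rewrite !inE interval_all //; apply/negP => /allP Hall.
  move: (Hmiss (digitvec b m k)) => /negP; apply; apply/eqP.
  rewrite -Etgt -map_comp; apply/eq_in_map => p Hp /=.
  rewrite -/(ent C k p); have /eqP -> := Hall p Hp.
  move: Hp; rewrite mem_Pd; case: p => j i /= /andP [Hj Hi].
  by rewrite /a numV_digit ?prime_gt0 // ordfE Fb_natK.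
rewrite cards0 => /esym/eqP; by rewrite expn_eq0 eqn0Ngt prime_gt0.
Qed.

End Main.

Lemma pboolT (P : Prop) : P -> pbool P.
Proof. by rewrite /pbool; case: excluded_middle_informative. Qed.
Lemma pboolP (P : Prop) : pbool P -> P.
Proof. by rewrite /pbool; case: excluded_middle_informative. Qed.

Lemma bigmin_le_seq (I : eqType) (r : seq I) (P : pred I) (F : I -> nat) x i0 :
  i0 \in r -> P i0 -> (\big[minn/x]_(i <- r | P i) F i <= F i0)%N.
Proof.
elim: r => // h r IH; rewrite inE big_cons => /orP [/eqP <- | Hr] Hp.
  by rewrite Hp geq_minl.
case: (P h); last exact: IH.
by rewrite geq_min IH ?orbT.
Qed.

Lemma bigmin_le_x (I : Type) (r : seq I) (P : pred I) (F : I -> nat) x :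
  (\big[minn/x]_(i <- r | P i) F i <= x)%N.
Proof.
apply: (big_rec (fun r => r <= x)%N) => // i y _ Hy.
by rewrite geq_min Hy orbT.
Qed.

Lemma leq_sum1 (I : finType) (u : {pred I}) (d : I -> nat) j :
  j \in u -> (d j <= \sum_(i in u) d i)%N.
Proof. by move=> Hj; rewrite (bigD1 j) //= leq_addr. Qed.

Unset Implicit Arguments.
Theorem corollary1 (b s m : nat) (Hb : prime b)
  (C : 'I_s -> 'M['F_b]_m) (t : {set 'I_s} -> nat)
  (Hnet : is_digital_tu_net C t)
  (w : 'I_s -> nat)
  (Hw1 : forall j : 'I_s, nat_of_ord j = 0%N -> w j = 0%N)
  (Hwmono : forall i j : 'I_s, (i <= j)%N -> (w i <= w j)%N) :
  forall (u : {set 'I_s}) (ubar : 'I_s),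
    u != set0 -> ubar \in u -> (forall j, j \in u -> (j <= ubar)%N) ->
    [/\ (maxn 0 (m - maxn (w ubar) (t u)) <= rho (row_reduce C w) u)%N,
        (rho (row_reduce C w) u <= maxn 0 (m - w ubar))%N
      & (min_quality (row_reduce C w) u <= minn m (maxn (w ubar) (t u)))%N].
Proof.
move=> u ubar Hu0 Hubar Hmax.
have Hnetu := Hnet u Hu0; have [Htu _] := Hnetu.
set R := row_reduce C w.
set T := maxn (w ubar) (t u).
have rowsE : forall d p, (forall j, j \in u -> d j <= m - w ubar)%N ->
    p \in Pd m u d -> rowf R p = rowf C p.
  move=> d [j i] Hd; rewrite mem_Pd /= => /andP [Hj Hi].
  apply/rowP => c; rewrite /rowf /= !mxE.
  have := Hd j Hj; have := Hwmono _ _ (Hmax j Hj).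
  by case: ifP => //; lia.
have freeC : forall d dd, (\sum_(j in u) d j)%N = dd -> (dd <= m - t u)%N ->
    (forall j, j \in u -> d j <= m)%N -> free (map (rowf C) (Pd m u d)).
  move=> d dd Hs Hdd Hd.
  pose d' := fun j => if j == ubar then (d j + (m - t u - dd))%N else d j.
  have Hdub : (d ubar <= dd)%N by rewrite -Hs leq_sum1.
  apply: (free_sub Hb (uniq_Pd _ _ _) _ (net_free Hb Hnetu (d := d') _ _)).
  - move=> [j i]; rewrite !mem_Pd /= /d' => /andP [-> Hi] /=.
    by case: ifP => _; lia.
  - rewrite (bigD1 ubar) //= /d' eqxx.
    rewrite (bigD1 ubar) //= in Hs.
    rewrite (eq_bigr (fun j => d j)); last by move=> j /andP [_ /negbTE ->].
    by rewrite addnAC Hs subnKC.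
  - move=> j Hj; rewrite /d'; case: ifP => [/eqP -> | _]; last exact: Hd.
    lia.
split.
- rewrite max0n.
  have Hlt : (m - T < m.+1)%N by lia.
  suff HP : pbool (lin_indep_prop R u (Ordinal Hlt)).
    rewrite /rho; exact: (leq_bigmax_cond (P := fun dd : 'I_m.+1 => pbool (lin_indep_prop R u dd))
              (F := fun dd : 'I_m.+1 => nat_of_ord dd) _ HP).
  apply: pboolT => d Hs Hd.
  have Hd' : forall j, j \in u -> (d j <= m - w ubar)%N.
    by move=> j Hj; have := leq_sum1 d Hj; rewrite Hs /= /T; lia.
  rewrite first_rowsE (_ : map (rowf R) (Pd m u d) = map (rowf C) (Pd m u d)); last by apply/eq_in_map => p Hp; rewrite (rowsE d).
  by apply: (freeC d _ Hs) => //; rewrite /= /T; lia.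
- rewrite max0n; apply/bigmax_leqP => dd /pboolP Hlin.
  rewrite leqNgt; apply/negP => Hlt.
  pose d := fun j => if j == ubar then nat_of_ord dd else 0%N.
  have Hdd : (dd <= m)%N by rewrite -ltnS.
  have := Hlin d.
  have -> : (\sum_(j in u) d j)%N = dd.
    rewrite (bigD1 ubar) //= /d eqxx big1 ?addn0 //.
    by move=> j /andP [_ /negbTE ->].
  move=> /(_ erefl).
  have Hd : forall j, j \in u -> (d j <= m)%N by move=> j _; rewrite /d; case: ifP.
  move=> /(_ Hd); rewrite first_rowsE.
  have Him : (m - w ubar < m)%N by lia.
  have Hin : (ubar, Ordinal Him) \in Pd m u d by rewrite mem_Pd /= Hubar /d eqxx.
  move=> /free_not0 /(_ (map_f (rowf R) Hin)) /negP; apply.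
  apply/eqP/rowP => c; rewrite /rowf /= !mxE.
  by case: ifP => //=; lia.
- case: (leqP m T) => HT.
    by rewrite /min_quality bigmin_le_x.
  have HTl : (T < m.+1)%N by lia.
  apply: (leq_trans (bigmin_le_seq (fun t : 'I_m.+1 => nat_of_ord t) m (i0 := Ordinal HTl) (mem_index_enum _) _)) => //.
  apply: pboolT; split; first exact: ltnW.
  move=> d a Hs Ha.
  have HdT : forall j, j \in u -> (d j <= m - T)%N.
    by move=> j Hj; rewrite -Hs leq_sum1.
  have Hdm : forall j, j \in u -> (d j <= m)%N.
    by move=> j Hj; apply: leq_trans (HdT j Hj) (leq_subr _ _).
  have Hdw : forall j, j \in u -> (d j <= m - w ubar)%N.
    by move=> j Hj; have := HdT j Hj; rewrite /T; lia.
  pose tg := map (fun p : 'I_s * 'I_m => ((digit b (a p.1) (d p.1) p.2)%:R)%R : 'F_b) (Pd m u d).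
  transitivity #|[set k : 'I_(b ^ m) |
     (fun v => ([seq (r *m v) 0 0 | r <- map (rowf C) (Pd m u d)] == tg)%R) (digitvec b m k)]|.
    apply: eq_card => k; rewrite !inE interval_all //.
    rewrite -map_comp /tg; apply/allP/eqP => H.
      apply/eq_in_map => p Hp /=; rewrite -(rowsE d p) //; exact/eqP/H.
    move=> p Hp; move/eq_in_map: H => /(_ p Hp) /= <-.
    by rewrite /ent (rowsE d p).
  rewrite (count_dv Hb (fun v : 'cV['F_b]_m => ([seq (r *m v) 0 0 | r <- map (rowf C) (Pd m u d)] == tg)%R)).
  have Hfr : free (map (rowf C) (Pd m u d)).
    by apply: (freeC d _ Hs) => //=; rewrite /T; lia.
  rewrite (count_rows Hfr); last by rewrite /tg !size_map.
  rewrite size_map size_Pd // card_Fp // Hs /=.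
  by rewrite subKn // ltnW.
Qed.
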